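(* Let $v\in T_1^\circ$ be a term of size $p$, let $\vec t=(t_1,\dots,t_p)$ be a sequence of terms of $T_1^*$, and let $t=v[\vec t]$. Then for every $\gamma\in B_\bullet$, $$t(\gamma)=t_1(\gamma)\cdot\partial t_2(\gamma)\cdot\ \cdots\ \cdot\partial^{p-1}t_p(\gamma)\cdot v(1).$$
   Context: $T_1^*$ (resp. $T_1^\circ$) is the set of terms in the single variable $x$ built using a binary operator $*$ (resp. $\circ$); the size of a term is its number of variable occurrences. $v[\vec t]$ is the term obtained from $v$ by substituting $t_1,\dots,t_p$ for the variable occurrences of $v$ enumerated from left to right. For a term $t$ and $\gamma\in B_\bullet$, $t(\gamma)$ is the evaluation of $t$ at $\gamma$ in $(B_\bullet,*,\circ)$, and $v(1)$ is the evaluation at the identity $1$. The group $B_\bullet$ is generated by $\sigma_1,\sigma_2,\dots$ and $a_1,a_2,\dots$ subject to: $\sigma_j\sigma_i=\sigma_i\sigma_j$ and $a_j\sigma_i=\sigma_ia_j$ for $j\ge i+2$; $a_j\sigma_i=\sigma_{i+1}a_j$ and $a_ja_i=a_{i+1}a_j$ for $j\le i-1$; $\sigma_j\sigma_i\sigma_j=\sigma_i\sigma_j\sigma_i$, $\sigma_i\sigma_ja_i=a_j\sigma_i$ and $\sigma_j\sigma_ia_j=a_i\sigma_i$ for $j=i+1$. $\partial$ is the endomorphism of $B_\bullet$ with $\partial\sigma_i=\sigma_{i+1}$, $\partial a_i=a_{i+1}$. The operations are $\beta*\gamma=\beta\cdot\partial\gamma\cdot\sigma_1\cdot\partial\beta^{-1}$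 and $\beta\circ\gamma=\beta\cdot\partial\gamma\cdot a_1$. *)

(* Defs.v *)
(* The group B_bullet is realized by its presentation:
   elements are words in the generators sigma_i, a_i and their inverses,
   and equality in B_bullet is the congruence [beq] generated by free
   cancellation and the defining relations.
   Indexing: [Sig i] stands for sigma_(i+1) and [Agen i] for a_(i+1)
   (0-based indices; the relations only depend on index differences). *)
From Stdlib Require Import List Arith.
Import ListNotations.

Inductive gen : Type := Sig (i : nat) | Agen (i : nat).

(* a letter: a generator together with an exponent flag (true = inverse) *)
Definition letter : Type := (gen * bool)%type.
Definition word : Type := list letter.

Definition g (x : gen) : word := [(x, false)].
Definition sig (i : nat) : word := g (Sig i).
Definition ag (i : nat) : word := g (Agen i).

Definition flip (l : letter) : letter := (fst l, negb (snd l)).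
Definition winv (w : word) : word := rev (map flip w).

Inductive rel : word -> word -> Prop :=
| rel_ss_far i j : i + 2 <= j -> rel (sig j ++ sig i) (sig i ++ sig j)
| rel_as_far i j : i + 2 <= j -> rel (ag j ++ sig i) (sig i ++ ag j)
| rel_as_shift i j : j + 1 <= i -> rel (ag j ++ sig i) (sig (S i) ++ ag j)
| rel_aa_shift i j : j + 1 <= i -> rel (ag j ++ ag i) (ag (S i) ++ ag j)
| rel_braid i : rel (sig (S i) ++ sig i ++ sig (S i)) (sig i ++ sig (S i) ++ sig i)
| rel_ssa i : rel (sig i ++ sig (S i) ++ ag i) (ag (S i) ++ sig i)
| rel_ssa' i : rel (sig (S i) ++ sig i ++ ag (S i)) (ag i ++ sig i).

Inductive beq : word -> word -> Prop :=
| beq_refl w : beq w w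
| beq_sym u w : beq u w -> beq w u
| beq_trans u v w : beq u v -> beq v w -> beq u w
| beq_free u l w : beq (u ++ [l; flip l] ++ w) (u ++ w)
| beq_rel u r1 r2 w : rel r1 r2 -> beq (u ++ r1 ++ w) (u ++ r2 ++ w).

Definition dgen (x : gen) : gen :=
  match x with Sig i => Sig (S i) | Agen i => Agen (S i) end.
Definition d (w : word) : word := map (fun l => (dgen (fst l), snd l)) w.
Definition dpow (k : nat) (w : word) : word := Nat.iter k d w.

Definition bstar (b c : word) : word := b ++ d c ++ sig 0 ++ d (winv b).
Definition bcirc (b c : word) : word := b ++ d c ++ ag 0.

Inductive term : Type :=
| Var : term
| Star : term -> term -> term
| Circ : term -> term -> term.

Fixpoint is_star (t : term) : Prop :=
  match t with Var => True | Star l r => is_star l /\ is_star r | Circ _ _ => False end.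
Fixpoint is_circ (t : term) : Prop :=
  match t with Var => True | Circ l r => is_circ l /\ is_circ r | Star _ _ => False end.

Fixpoint tsize (t : term) : nat :=
  match t with Var => 1 | Star l r | Circ l r => tsize l + tsize r end.

Fixpoint subst_aux (v : term) (ts : list term) : term * list term :=
  match v with
  | Var => match ts with t :: ts' => (t, ts') | [] => (Var, []) end
  | Star l r => let (l', ts1) := subst_aux l ts in
                let (r', ts2) := subst_aux r ts1 in (Star l' r', ts2)
  | Circ l r => let (l', ts1) := subst_aux l ts in
                let (r', ts2) := subst_aux r ts1 in (Circ l' r', ts2)
  end.
Definition subst (v : term) (ts : list term) : term := fst (subst_aux v ts).

Fixpoint eval (t : term) (gam : word) : word :=
  match t with
  | Var => gam
  | Star l r => bstar (eval l gam) (eval r gam)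
  | Circ l r => bcirc (eval l gam) (eval r gam)
  end.

Fixpoint dprod (k : nat) (ts : list term) (gam : word) : word :=
  match ts with
  | [] => []
  | t :: ts' => dpow k (eval t gam) ++ dprod (S k) ts' gam
  end.

(* Main.v *)
Require Import Defs.
From Stdlib Require Import List Arith Lia.
Import ListNotations.

Lemma beq_appr u u' w : beq u u' -> beq (u ++ w) (u' ++ w).
Proof.
  induction 1.
  - apply beq_refl.
  - now apply beq_sym.
  - eapply beq_trans; eauto.
  - pose proof (beq_free u l (w0 ++ w)). rewrite <- !(@app_assoc letter). exact H.
  - rewrite <- !(@app_assoc letter). now apply beq_rel.
Qed.

Lemma beq_appl w u u' : beq u u' -> beq (w ++ u) (w ++ u').
Proof.
  induction 1.
  - apply beq_refl.
  - now apply beq_sym.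
  - eapply beq_trans; eauto.
  - rewrite !(@app_assoc letter). pose proof (beq_free (w ++ u) l w0).
    rewrite <- !(@app_assoc letter) in *. exact H.
  - rewrite !(@app_assoc letter). pose proof (beq_rel (w ++ u) r1 r2 w0 H).
    rewrite <- !(@app_assoc letter) in *. exact H0.
Qed.

Lemma beq_app u u' w w' : beq u u' -> beq w w' -> beq (u ++ w) (u' ++ w').
Proof.
  intros. eapply beq_trans. apply beq_appr; eauto. apply beq_appl; auto.
Qed.

Lemma d_app a b : d (a ++ b) = d a ++ d b.
Proof. unfold d. apply map_app. Qed.

Lemma dpow_app k a b : dpow k (a ++ b) = dpow k a ++ dpow k b.
Proof. induction k; simpl; auto. rewrite IHk. apply d_app. Qed.

Lemma dpow_add k m x : dpow k (dpow m x) = dpow (k + m) x.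
Proof. unfold dpow. now rewrite Nat.iter_add. Qed.

Lemma rel_d r1 r2 : rel r1 r2 -> rel (d r1) (d r2).
Proof.
  destruct 1; simpl; unfold d, sig, ag, g; simpl.
  - apply (rel_ss_far (S i) (S j)); lia.
  - apply (rel_as_far (S i) (S j)); lia.
  - apply (rel_as_shift (S i) (S j)); lia.
  - apply (rel_aa_shift (S i) (S j)); lia.
  - apply (rel_braid (S i)).
  - apply (rel_ssa (S i)).
  - apply (rel_ssa' (S i)).
Qed.

Lemma beq_d u w : beq u w -> beq (d u) (d w).
Proof.
  induction 1.
  - apply beq_refl.
  - now apply beq_sym.
  - eapply beq_trans; eauto.
  - rewrite !d_app. simpl. destruct l as [x b].
    pose proof (beq_free (d u) (dgen x, b) (d w)). exact H.
  - rewrite !d_app. apply beq_rel. now apply rel_d.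
Qed.

Lemma flip_flip l : flip (flip l) = l.
Proof. destruct l; unfold flip; simpl; now rewrite Bool.negb_involutive. Qed.

Lemma comm_inv x l l' : beq (x ++ [l]) ([l'] ++ x) ->
  beq (x ++ [flip l]) ([flip l'] ++ x).
Proof.
  intros H.
  eapply beq_trans.
  { apply beq_sym. pose proof (beq_free [] (flip l') (x ++ [flip l])).
    rewrite flip_flip in H0. exact H0. }
  simpl. change (flip l' :: l' :: x ++ [flip l]) with ([flip l'] ++ (([l'] ++ x) ++ [flip l])).
  eapply beq_trans. apply beq_appl. apply beq_appr. apply beq_sym. exact H.
  rewrite <- !(@app_assoc letter). simpl.
  pose proof (beq_free ([flip l'] ++ x) l []). rewrite <- !(@app_assoc letter) in H0.
  simpl in H0. rewrite app_nil_r in H0. exact H0.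
Qed.

Definition dl (l : letter) : letter := (dgen (fst l), snd l).

Lemma comm_letter l : beq (ag 0 ++ [dl l]) ([dl (dl l)] ++ ag 0).
Proof.
  destruct l as [[i|i] [|]]; unfold dl; cbn [fst snd dgen].
  - change (Sig (S i), true) with (flip (Sig (S i), false)).
    change (Sig (S (S i)), true) with (flip (Sig (S (S i)), false)).
    apply comm_inv.
    pose proof (beq_rel [] _ _ [] (rel_as_shift (S i) 0 ltac:(lia))).
    simpl in H. exact H.
  - pose proof (beq_rel [] _ _ [] (rel_as_shift (S i) 0 ltac:(lia))).
    simpl in H. exact H.
  - change (Agen (S i), true) with (flip (Agen (S i), false)).
    change (Agen (S (S i)), true) with (flip (Agen (S (S i)), false)).
    apply comm_inv.
    pose proof (beq_rel [] _ _ [] (rel_aa_shift (S i) 0 ltac:(lia))).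
    simpl in H. exact H.
  - pose proof (beq_rel [] _ _ [] (rel_aa_shift (S i) 0 ltac:(lia))).
    simpl in H. exact H.
Qed.

Lemma comm_a0 y : beq (ag 0 ++ d y) (d (d y) ++ ag 0).
Proof.
  induction y as [|l y IH].
  - simpl. apply beq_refl.
  - replace (d (l :: y)) with ([dl l] ++ d y) by reflexivity.
    replace (d ([dl l] ++ d y)) with ([dl (dl l)] ++ d (d y)) by reflexivity.
    rewrite (@app_assoc letter).
    eapply beq_trans. apply beq_appr. apply comm_letter.
    rewrite <- !(@app_assoc letter). apply beq_appl. exact IH.
Qed.

Lemma vcomm v : is_circ v -> forall x,
  beq (eval v [] ++ d x) (dpow (tsize v) x ++ eval v []).
Proof.
  induction v as [|l IHl r IHr|l IHl r IHr]; simpl; intros Hv x.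
  - rewrite app_nil_r. apply beq_refl.
  - destruct Hv.
  - destruct Hv as [Hl Hr]. unfold bcirc.
    set (L := eval l []). set (R := eval r []).
    rewrite <- !(@app_assoc letter).
    eapply beq_trans. apply beq_appl. apply beq_appl. apply comm_a0.
    rewrite !(@app_assoc letter). rewrite <- ((@app_assoc letter) L), <- d_app.
    eapply beq_trans. apply beq_appr. apply beq_appl. apply beq_d. apply IHr; auto.
    rewrite d_app, (@app_assoc letter).
    eapply beq_trans. apply beq_appr. apply beq_appr. apply IHl; auto.
    rewrite dpow_add, Nat.add_comm. rewrite <- !(@app_assoc letter). apply beq_refl.
Qed.

Lemma sa v ts rest : length ts = tsize v ->
  subst_aux v (ts ++ rest) = (fst (subst_aux v ts), rest).
Proof.
  revert ts rest.
  induction v as [|l IHl r IHr|l IHl r IHr]; simpl; intros ts rest H.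
  - destruct ts as [|t [|]]; simpl in *; try discriminate. reflexivity.
  - rewrite <- (firstn_skipn (tsize l) ts).
    assert (H1 : length (firstn (tsize l) ts) = tsize l) by (rewrite length_firstn; rewrite ?length_app in *; lia).
    assert (H2 : length (skipn (tsize l) ts) = tsize r) by (rewrite length_skipn; rewrite ?length_app in *; lia).
    rewrite <- app_assoc, IHl by auto.
    rewrite IHl by auto. simpl.
    rewrite IHr by auto. rewrite <- (app_nil_r (skipn _ _)) at 2. rewrite IHr by auto.
    reflexivity.
  - rewrite <- (firstn_skipn (tsize l) ts).
    assert (H1 : length (firstn (tsize l) ts) = tsize l) by (rewrite length_firstn; rewrite ?length_app in *; lia).
    assert (H2 : length (skipn (tsize l) ts) = tsize r) by (rewrite length_skipn; rewrite ?length_app in *; lia).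
    rewrite <- app_assoc, IHl by auto.
    rewrite IHl by auto. simpl.
    rewrite IHr by auto. rewrite <- (app_nil_r (skipn _ _)) at 2. rewrite IHr by auto.
    reflexivity.
Qed.

Lemma subst_circ l r ts1 ts2 : length ts1 = tsize l -> length ts2 = tsize r ->
  subst (Circ l r) (ts1 ++ ts2) = Circ (subst l ts1) (subst r ts2).
Proof.
  intros H1 H2. unfold subst. simpl. rewrite sa by auto.
  destruct (subst_aux r ts2); reflexivity.
Qed.

Lemma dprod_shift ts gam : forall k m, dprod (k + m) ts gam = dpow k (dprod m ts gam).
Proof.
  induction ts as [|t ts IH]; simpl; intros k m.
  - induction k; simpl; auto. rewrite <- IHk. reflexivity.
  - rewrite dpow_app, dpow_add. f_equal.
    rewrite <- IH. f_equal. lia.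
Qed.

Lemma dprod_app ts1 ts2 gam : forall k,
  dprod k (ts1 ++ ts2) gam = dprod k ts1 gam ++ dprod (k + length ts1) ts2 gam.
Proof.
  induction ts1 as [|t ts IH]; simpl; intros k.
  - rewrite Nat.add_0_r. reflexivity.
  - rewrite IH, <- (@app_assoc letter). do 3 f_equal. lia.
Qed.

Theorem lemma2p8 (v : term) (ts : list term) :
  is_circ v -> length ts = tsize v -> Forall is_star ts ->
  forall gam : word,
    beq (eval (subst v ts) gam) (dprod 0 ts gam ++ eval v []).
Proof.
  intros Hv Hlen _ gam. revert ts Hlen.
  induction v as [|l IHl r IHr|l IHl r IHr]; simpl in *; intros ts Hlen.
  - destruct ts as [|t [|]]; simpl in *; try discriminate.
    unfold subst; simpl. rewrite !app_nil_r. apply beq_refl.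
  - destruct Hv.
  - destruct Hv as [Hl Hr].
    assert (H1 : length (firstn (tsize l) ts) = tsize l) by (rewrite length_firstn; lia).
    assert (H2 : length (skipn (tsize l) ts) = tsize r) by (rewrite length_skipn; lia).
    rewrite <- (firstn_skipn (tsize l) ts).
    set (ts1 := firstn (tsize l) ts) in *. set (ts2 := skipn (tsize l) ts) in *.
    rewrite subst_circ by auto. simpl. unfold bcirc.
    eapply beq_trans. apply beq_app. apply IHl; auto.
    apply beq_appr. apply beq_d. apply IHr; auto.
    rewrite dprod_app, H1, d_app.
    set (L := eval l []). set (R := eval r []).
    rewrite <- !(@app_assoc letter). apply beq_appl.
    rewrite ((@app_assoc letter) L).
    eapply beq_trans. apply beq_appr. apply vcomm; auto.
    replace (dprod (0 + tsize l) ts2 gam) with (dpow (tsize l) (dprod 0 ts2 gam))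
      by (rewrite <- dprod_shift; f_equal; lia).
    rewrite <- !(@app_assoc letter). apply beq_refl.
Qed.
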